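(* Let $d\geq 0$ and $0<i\leq d+1$ be integers such that $i$ divides $d+1$. Let $\Delta\in\mathcal{C}(i,d)$. Then $f_j(\Delta)\geq f_j(S(i,d))$ for every $j$.
   Context: All simplicial complexes are finite abstract simplicial complexes; $f_j(\Delta)$ denotes the number of $j$-dimensional faces (faces with $j+1$ vertices) of $\Delta$. A set $F$ of vertices is a missing face of $\Delta$ if $F\notin\Delta$ but every proper subset of $F$ is in $\Delta$; its dimension is $|F|-1$. $\mathcal{C}(i,d)$ denotes the family of $d$-dimensional simplicial complexes $\Delta$ with $\tilde H_d(\Delta;\mathbb{Z})\neq 0$ (reduced homology) and with no missing faces of dimension $>i$. For integers $d\geq 0$, $i>0$ let $q\geq 0$ and $1\leq r\leq i$ be the unique integers with $d+1=qi+r$, and let $S(i,d)=\partial\sigma^i*\cdots*\partial\sigma^i*\partial\sigma^r$ (the simplicial join of $q$ copies of $\partial\sigma^i$ and one copy of $\partial\sigma^r$), where $\partial\sigma^k$ denotes the boundary complex of the $k$-simplex (all proper subsets of a $(k+1)$-element vertex set), the factors being on pairwise disjoint vertex sets. $S(i,d)$ is a $d$-dimensional simplicial sphere. *)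

(* Defs.v *)
From mathcomp Require Import all_boot all_order all_algebra.
Set Implicit Arguments. Unset Strict Implicit. Unset Printing Implicit Defensive.
Import GRing.Theory Num.Theory.

Definition is_complex (n : nat) (D : {set {set 'I_n}}) : Prop :=
  forall F G : {set 'I_n}, F \in D -> G \subset F -> G \in D.

Definition fnum (T : finType) (j : nat) (D : {set {set T}}) : nat :=
  #|[set F in D | #|F| == j.+1]|.

Definition has_dim (n : nat) (D : {set {set 'I_n}}) (d : nat) : Prop :=
  (exists2 F, F \in D & #|F| = d.+1) /\ (forall F, F \in D -> #|F| <= d.+1).

Definition missing_face (n : nat) (D : {set {set 'I_n}}) (F : {set 'I_n}) : Prop :=
  F \notin D /\ (forall G : {set 'I_n}, G \proper F -> G \in D).

Definition no_missing_above (n : nat) (D : {set {set 'I_n}}) (i : nat) : Prop :=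
  forall F, missing_face D F -> #|F| <= i.+1.

(* Incidence sign [F : G] for G = F \ {w}: (-1)^(number of vertices of F below w),
   w.r.t. the natural order on 'I_n. *)
Definition incid (n : nat) (F G : {set 'I_n}) : int :=
  (-1) ^+ (\sum_(w in F :\: G) #|[set u in F | (u < w)%N]|).

(* Simplicial boundary of an integer d-chain c (supported on the d-faces of D),
   evaluated at a (d-1)-face G (for d = 0, G = set0 and this is the augmentation). *)
Definition boundary_at (n : nat) (D : {set {set 'I_n}}) (d : nat)
    (c : {set 'I_n} -> int) (G : {set 'I_n}) : int :=
  \sum_(F in D | (#|F| == d.+1) && (G \subset F)) incid F G * c F.

(* Reduced top homology \tilde H_d(D; Z) is nonzero: since there are no
   (d+1)-faces, \tilde H_d = ker(\partial_d), so this says there is a nonzero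
   integral d-cycle. *)
Definition top_homology_nonzero (n : nat) (D : {set {set 'I_n}}) (d : nat) : Prop :=
  exists c : {set 'I_n} -> int,
    (exists2 F, (F \in D) && (#|F| == d.+1) & c F != 0) /\
    (forall G : {set 'I_n}, #|G| = d -> boundary_at D d c G = 0).

Definition in_C (n : nat) (i d : nat) (D : {set {set 'I_n}}) : Prop :=
  [/\ is_complex D, has_dim D d, top_homology_nonzero D d & no_missing_above D i].

(* S(i,d): d+1 = q*i + r with 1 <= r <= i, i.e. q = d %/ i, r = d %% i + 1.
   Vertex set 'I_(q*(i+1) + r+1), split into blocks v %/ (i+1) = 0..q;
   blocks 0..q-1 have i+1 vertices, block q has r+1 vertices.
   A set is a face of the join of the boundaries iff it contains no full block. *)
Definition S_q (i d : nat) : nat := d %/ i.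
Definition S_r (i d : nat) : nat := (d %% i).+1.
Definition S_nv (i d : nat) : nat := S_q i d * i.+1 + (S_r i d).+1.

Definition S_block (i d : nat) (k : nat) : {set 'I_(S_nv i d)} :=
  [set v : 'I_(S_nv i d) | v %/ i.+1 == k].

Definition S_cplx (i d : nat) : {set {set 'I_(S_nv i d)}} :=
  [set F : {set 'I_(S_nv i d)} |
     [forall k : 'I_(S_q i d).+1, ~~ (S_block i d k \subset F)]].

(* Main.v *)
Require Import Defs.
From mathcomp Require Import all_boot all_order all_algebra.
From Stdlib Require Import Ring.

Module AlgM.
Import GRing.Theory Num.Theory.
Local Open Scope ring_scope.
Definition PI := {poly int}.
Definition pa (x y : PI) : PI := x + y.
Definition pm (x y : PI) : PI := x * y.
Definition po (x : PI) : PI := - x.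
Definition ps (x y : PI) : PI := x - y.
Definition p0 : PI := 0.
Definition p1 : PI := 1.
Lemma PIrt : @ring_theory PI p0 p1 pa pm ps po eq.
Proof.
constructor; rewrite /pa /pm /ps /po /p0 /p1.
- exact: add0r.
- exact: addrC.
- exact: addrA.
- exact: mul1r.
- exact: mulrC.
- exact: mulrA.
- exact: mulrDl.
- by [].
- exact: subrr.
Qed.
Add Ring PIring : PIrt.

Definition Pp (x : nat) : PI := (1 + 'X) ^+ x - 'X ^+ x.
Definition nng (p : PI) := forall j, (0 <= p`_j)%R.
Definition pge (p q : PI) := nng (p - q).

Lemma nngD p q : nng p -> nng q -> nng (p + q).
Proof. by move=> hp hq j; rewrite coefD addr_ge0. Qed.
Lemma nngM p q : nng p -> nng q -> nng (p * q).
Proof. by move=> hp hq j; rewrite coefM sumr_ge0 // => k _; rewrite mulr_ge0. Qed.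
Lemma nng1 : nng 1.
Proof. by move=> j; rewrite coef1; case: (j == 0)%N. Qed.
Lemma nngX : nng 'X.
Proof. by move=> j; rewrite coefX; case: (j == 1)%N. Qed.
Lemma nngXn p n : nng p -> nng (p ^+ n).
Proof. move=> hp; elim: n => [|n IH]; first by rewrite expr0; apply: nng1. by rewrite exprS; apply: nngM. Qed.
Lemma nng1X : nng (1 + 'X).
Proof. exact: nngD nng1 nngX. Qed.

Lemma id1 (u w a b : PI) : pa (pm u (ps a b)) (pm (ps u w) b) = ps (pm u a) (pm w b).
Proof. ring. Qed.

Lemma PpS x : Pp x.+1 = (1 + 'X) * Pp x + 'X ^+ x.
Proof.
rewrite /Pp !exprS.
have := id1 (1 + 'X) 'X ((1 + 'X) ^+ x) ('X ^+ x); rewrite /pa /pm /ps => <-.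
by rewrite addrK mul1r.
Qed.

Lemma nngPp x : nng (Pp x).
Proof.
elim: x => [|x IH]; first by rewrite /Pp !expr0 subrr => j; rewrite coef0.
rewrite PpS; apply: nngD; [exact: nngM nng1X IH | exact: nngXn nngX].
Qed.

Lemma nng0 : nng 0.
Proof. by move=> j; rewrite coef0. Qed.

Lemma pge_refl p : pge p p.
Proof. by rewrite /pge subrr; apply: nng0. Qed.
Lemma id2 (p q r : PI) : ps p r = pa (ps p q) (ps q r).
Proof. ring. Qed.
Lemma pge_trans p q r : pge p q -> pge q r -> pge p r.
Proof. move=> h1 h2; rewrite /pge; have := id2 p q r; rewrite /pa /ps => ->. exact: nngD. Qed.
Lemma id3 (r p q : PI) : ps (pm r p) (pm r q) = pm r (ps p q).
Proof. ring. Qed.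
Lemma pgeMl r p q : nng r -> pge p q -> pge (r * p) (r * q).
Proof. move=> hr h; rewrite /pge; have := id3 r p q; rewrite /pm /ps => ->. exact: nngM. Qed.
Lemma id4 (p q p' q' : PI) : ps (pa p p') (pa q q') = pa (ps p q) (ps p' q').
Proof. ring. Qed.
Lemma pgeD p q p' q' : pge p q -> pge p' q' -> pge (p + p') (q + q').
Proof. move=> h h'; rewrite /pge; have := id4 p q p' q'; rewrite /pa /ps => ->. exact: nngD. Qed.
Lemma pge0 p : nng p -> pge p 0.
Proof. by rewrite /pge subr0. Qed.

Lemma id5 (a b c d : PI) : ps (pm a c) (pm b d) = pa (pm a (ps c d)) (pm d (ps a b)).
Proof. ring. Qed.
Lemma PpD m n : Pp (m + n) = (1 + 'X) ^+ m * Pp n + 'X ^+ n * Pp m.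
Proof.
rewrite /Pp !exprD.
have := id5 ((1 + 'X) ^+ m) ('X ^+ m) ((1 + 'X) ^+ n) ('X ^+ n); rewrite /pa /pm /ps => ->.
by [].
Qed.

Lemma idQ (U W ux wx uy wy : PI) :
  ps (pm (pa (pm U (ps ux wx)) (pm wx (ps U W))) (pa (pm U (ps uy wy)) (pm wy (ps U W))))
     (pm (pa (pm U (pa (pm ux (ps uy wy)) (pm wy (ps ux wx)))) (pm (pm wx wy) (ps U W))) (ps U W))
  = pm (pm U W) (pm (ps ux wx) (ps uy wy)).
Proof. ring. Qed.

Lemma Qcomp e x y : pge (Pp (e + x).+1 * Pp (e + y).+1) (Pp (e + x + y).+1 * Pp e.+1).
Proof.
have E1 : Pp (e + x).+1 = (1 + 'X) ^+ e.+1 * Pp x + 'X ^+ x * Pp e.+1.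
  by rewrite -addSn PpD.
have E2 : Pp (e + y).+1 = (1 + 'X) ^+ e.+1 * Pp y + 'X ^+ y * Pp e.+1.
  by rewrite -addSn PpD.
have E3 : Pp (e + x + y).+1 = (1 + 'X) ^+ e.+1 * Pp (x + y) + 'X ^+ (x + y) * Pp e.+1.
  by rewrite -addnA -addSn PpD.
have E4 : Pp (x + y) = (1 + 'X) ^+ x * Pp y + 'X ^+ y * Pp x by rewrite PpD.
rewrite /pge E1 E2 E3 E4 exprD /Pp.
have := idQ ((1 + 'X) ^+ e.+1) ('X ^+ e.+1) ((1 + 'X) ^+ x) ('X ^+ x) ((1 + 'X) ^+ y) ('X ^+ y).
rewrite /pa /pm /ps => ->.
apply: nngM; first by apply: nngM; apply: nngXn; [exact: nng1X|exact: nngX].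
by apply: nngM; apply: nngPp.
Qed.

End AlgM.
Import AlgM.
Module Alg2M.
Import GRing.Theory Num.Theory.
Local Open Scope ring_scope.

Definition Bp (i e : nat) : PI := Pp i.+1 ^+ (e %/ i) * Pp (e %% i).+1.

Lemma Pp1 : Pp 1 = 1.
Proof. by rewrite /Pp !expr1 addrK. Qed.

Lemma step i e k : (0 < i)%N -> (0 < k)%N -> (k <= i)%N -> (k <= e)%N ->
  pge (Pp k.+1 * Bp i (e - k)%N) (Bp i e).
Proof.
move=> i0 k0 ki ke.
rewrite /Bp.
set q := ((e - k) %/ i)%N; set r := ((e - k) %% i)%N.
have rlt : (r < i)%N by rewrite ltn_mod.
have Ee : e = (q * i + (r + k))%N by rewrite addnA -divn_eq subnK.
rewrite mulrCA.
have nQ : nng (Pp i.+1 ^+ q) by apply: nngXn; apply: nngPp.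
have [hrk|hrk] := ltnP (r + k)%N i.
  have -> : (e %/ i = q)%N by rewrite Ee divnMDl // (divn_small hrk) addn0.
  have -> : (e %% i = r + k)%N by rewrite Ee modnMDl (modn_small hrk).
  apply: pgeMl => //.
  have := Qcomp 0 k r; rewrite !add0n Pp1 mulr1 addnC //.
set e0 := (r + k - i)%N.
have He0 : (r + k = e0 + i)%N by rewrite subnK.
have e0lt : (e0 < i)%N by rewrite -(ltn_add2r i) -He0 -addSn leq_add.
have Ee' : e = (q.+1 * i + e0)%N by rewrite Ee He0 mulSnr addnA addnAC.
have -> : (e %/ i = q.+1)%N by rewrite Ee' divnMDl // (divn_small e0lt) addn0.
have -> : (e %% i = e0)%N by rewrite Ee' modnMDl (modn_small e0lt).
rewrite exprSr -mulrA; apply: pgeMl => //.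
have := Qcomp e0 (i - r) (i - k).
have -> : (e0 + (i - r) = k)%N by rewrite addnBA ?(ltnW rlt) // -He0 addKn.
have -> : (e0 + (i - k) = r)%N by rewrite addnBA // -He0 addnK.
have -> : (k + (i - k) = i)%N by rewrite subnKC.
done.
Qed.

End Alg2M.
Import Alg2M.
Module CombM.
Import GRing.Theory Num.Theory.
Local Open Scope ring_scope.
Set Implicit Arguments. Unset Strict Implicit.

Section Comb.
Variable T : finType.
Implicit Types (Y Z L : {set {set T}}) (A B G M : {set T}).

Definition fp Y : PI := \sum_(F in Y) 'X^#|F|.

Lemma sum_count (Z : {set {set T}}) (P : pred {set T}) :
  \sum_(F in Z | P F) (1 : int) = (#|[set F in Z | P F]|)%:R.
Proof.
rewrite -sumr_const; apply: eq_bigl => F; by rewrite inE.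
Qed.

Lemma coef_fp Y s : (fp Y)`_s = (#|[set F in Y | #|F| == s]|)%:R.
Proof.
rewrite /fp coef_sum.
under eq_bigr do rewrite coefXn.
rewrite [LHS](bigID (fun F : {set T} => #|F| == s)) /=.
rewrite [X in _ + X]big1 ?addr0; last by move=> F /andP [_ /negbTE]; rewrite eq_sym => ->.
rewrite -sum_count; apply: eq_bigr => F /andP [_ /eqP ->]; by rewrite eqxx.
Qed.

Lemma nng_fp Y : nng (fp Y).
Proof. by move=> j; rewrite coef_fp ler0n. Qed.

Lemma fp_sub Y Z : Z \subset Y -> pge (fp Y) (fp Z).
Proof.
move=> sZY j; rewrite coefB !coef_fp subr_ge0 ler_nat.
apply: subset_leq_card; apply/subsetP => F; rewrite !inE => /andP [FZ ->].
by rewrite (subsetP sZY).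
Qed.

Lemma disjU_inj A B B' : [disjoint A & B] -> [disjoint A & B'] -> A :|: B = A :|: B' -> B = B'.
Proof.
move=> dB dB' E.
have h (C : {set T}) : [disjoint A & C] -> (A :|: C) :\: A = C.
  move=> dC; rewrite setDUl setDv set0U; apply/setDidPl; by rewrite disjoint_sym.
by rewrite -(h B dB) -(h B' dB') E.
Qed.

Lemma fp_imset A L : (forall B, B \in L -> [disjoint A & B]) ->
  fp ((fun B => A :|: B) @: L) = 'X^#|A| * fp L.
Proof.
move=> dL; rewrite /fp big_imset; last first.
  by move=> B B' hB hB'; apply: disjU_inj; apply: dL.
rewrite mulr_sumr; apply: eq_bigr => B hB.
by rewrite cardsU (disjoint_setI0 (dL _ hB)) cards0 subn0 exprD.
Qed.

Lemma nng_sum (I : finType) (P : pred I) (F : I -> PI) :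
  (forall i, P i -> nng (F i)) -> nng (\sum_(i | P i) F i).
Proof.
move=> h; apply: (big_ind nng) => //; [exact: nng0 | exact: nngD].
Qed.

Lemma pge_sum (I : finType) (P : pred I) (F G : I -> PI) :
  (forall i, P i -> pge (F i) (G i)) -> pge (\sum_(i | P i) F i) (\sum_(i | P i) G i).
Proof. by move=> h; rewrite /pge -sumrB; apply: nng_sum. Qed.

Lemma fp_part Y M : fp Y = \sum_(A : {set T}) fp [set G in Y | G :&: M == A].
Proof.
rewrite /fp (partition_big (fun G => G :&: M) xpredT) //=.
apply: eq_bigr => A _; apply: eq_bigl => G; by rewrite inE.
Qed.

Lemma coef_1Xn n s : ((1 + 'X) ^+ n : PI)`_s = ('C(n, s))%:R.
Proof.
rewrite exprDn.
have -> : \sum_(i < n.+1) ((1 : PI) ^+ (n - i) * 'X ^+ i) *+ 'C(n, i)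
   = \poly_(i < n.+1) ('C(n, i))%:R.
  rewrite poly_def; apply: eq_bigr => i _; by rewrite expr1n mul1r scaler_nat.
rewrite coef_poly; case: ltnP => // hs; by rewrite bin_small.
Qed.

Lemma sum_sub M : \sum_(A : {set T} | A \subset M) ('X^#|A| : PI) = (1 + 'X) ^+ #|M|.
Proof.
apply/polyP => s; rewrite coef_1Xn.
have -> : \sum_(A : {set T} | A \subset M) ('X^#|A| : PI) = fp (powerset M).
  by rewrite /fp; apply: eq_bigl => A; rewrite powersetE.
rewrite coef_fp -cards_draws; congr (_%:R); apply: eq_card => A; by rewrite !inE ?powersetE.
Qed.

Lemma sum_proper M : \sum_(A : {set T} | A \proper M) ('X^#|A| : PI) = Pp #|M|.
Proof.
rewrite /Pp -sum_sub [in RHS](bigD1 M) //= [in RHS]addrC addrK; apply: eq_bigl => A.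
by rewrite properEneq andbC.
Qed.

Lemma decomp_lb Y M (c : PI) :
  (forall A, A \proper M -> exists L, pge (fp L) c /\
      forall B, B \in L -> [disjoint B & M] /\ A :|: B \in Y) ->
  pge (fp Y) (Pp #|M| * c).
Proof.
move=> h.
rewrite (fp_part Y M) (bigID (fun A : {set T} => A \proper M)) /= -sum_proper mulr_suml.
rewrite -[X in pge _ X]addr0; apply: pgeD; last by apply: pge0; apply: nng_sum => A _; apply: nng_fp.
apply: pge_sum => A hA.
have [L [hLc hL]] := h A hA.
have dAL : forall B, B \in L -> [disjoint A & B].
  move=> B /hL [dB _]; apply: disjointWl (proper_sub hA) _; by rewrite disjoint_sym.
have sub : (fun B => A :|: B) @: L \subset [set G in Y | G :&: M == A].
  apply/subsetP => G /imsetP [B hB ->]; have [dB hY] := hL B hB.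
  rewrite inE hY /= setIUl (setIidPl (proper_sub hA)).
  by rewrite (disjoint_setI0 dB) setU0.
apply: (pge_trans _ _ _ (fp_sub sub)).
rewrite fp_imset //; apply: pgeMl => //; apply: nngXn; exact: nngX.
Qed.
End Comb.

Lemma decomp_eq (T : finType) (Y : {set {set T}}) (M : {set T}) (L : {set {set T}}) :
  (forall G, G \in Y -> ~~ (M \subset G)) ->
  (forall B, B \in L -> [disjoint B & M]) ->
  (forall A : {set T}, A \proper M -> [set G in Y | G :&: M == A] = (fun B => A :|: B) @: L) ->
  fp Y = Pp #|M| * fp L.
Proof.
move=> hY hL hA.
rewrite (fp_part Y M) (bigID (fun A : {set T} => A \proper M)) /= -sum_proper mulr_suml.
rewrite [X in _ + X]big1 ?addr0; last first.
  move=> A0 nA; rewrite /fp big1 // => G; rewrite inE => /andP [GY /eqP GA].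
  exfalso; move: nA; rewrite -GA properEneq subsetIr andbT negbK => /eqP E.
  by move: (hY G GY); rewrite -E subsetIl.
apply: eq_bigr => A pA; rewrite hA // fp_imset // => B /hL dB.
apply: disjointWl (proper_sub pA) _; by rewrite disjoint_sym.
Qed.

End CombM.
Import CombM.
Module MainM.
Import GRing.Theory Num.Theory.
Set Implicit Arguments. Unset Strict Implicit.

Section Main.
Variable T : finType.
Implicit Types (D K L : {set {set T}}) (A B F G N U : {set T}).

Definition cplx D := forall F G, F \in D -> G \subset F -> G \in D.
Definition dimle e D := forall F, F \in D -> #|F| <= e.
Definition nolg i D := forall F, F \notin D -> (forall G, G \proper F -> G \in D) -> #|F| <= i.+1.
Definition goodK e K D :=
  [/\ (forall F, F \in K -> F \in D), (forall F, F \in K -> #|F| = e), (exists F, F \in K) &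
      (forall F x, F \in K -> x \in F -> exists F', [/\ F' \in K, F' != F & F :\ x \subset F'])].

Definition lk A D := [set B in D | [disjoint B & A] && (B :|: A \in D)].

Lemma cardsUd A B : [disjoint A & B] -> #|A :|: B| = #|A| + #|B|.
Proof. by move=> d; rewrite cardsU (disjoint_setI0 d) cards0 subn0. Qed.

Lemma setDU A F : A \subset F -> (F :\: A) :|: A = F.
Proof.
move=> sAF; apply/setP => v; rewrite !inE.
by case vA: (v \in A); rewrite ?orbT ?orbF ?andbT //= (subsetP sAF).
Qed.

Lemma disjD A F : [disjoint F :\: A & A].
Proof. rewrite disjoint_subset; apply/subsetP => v; rewrite !inE => /andP [vA _]; exact: vA. Qed.

Lemma minnf D U : U \notin D -> exists N, [/\ N \subset U, N \notin D & forall G, G \proper N -> G \in D].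
Proof.
move: {2}#|U| (leqnn #|U|) => n; elim: n U => [|n IH] U hU UD.
  exists U; split => // G; move/proper_card; by rewrite ltnNge (leq_trans hU).
case: (boolP [forall G : {set T}, (G \proper U) ==> (G \in D)]) => h.
  exists U; split => // G hG; exact: (implyP (forallP h G)).
move/forallPn: h => [G]; rewrite negb_imply => /andP [GU GD].
have Gn : #|G| <= n by rewrite -ltnS (leq_trans (proper_card GU)).
have [N [NG ND Nm]] := IH G Gn GD.
exists N; split => //; exact: subset_trans NG (proper_sub GU).
Qed.

Lemma lk_cplx A D : cplx D -> cplx (lk A D).
Proof.
move=> cD F G; rewrite !inE => /and3P [FD dF FAD] GF.
rewrite (cD _ _ FD GF) (disjointWl GF dF) /=.
exact: cD _ _ FAD (setSU _ GF).
Qed.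

Lemma lk_dim e A D : dimle e D -> dimle (e - #|A|) (lk A D).
Proof.
move=> dD B; rewrite inE => /and3P [_ dB BA].
have := dD _ BA; rewrite cardsUd // => h.
rewrite leq_subRL; first by rewrite addnC.
by apply: leq_trans h; rewrite leq_addl.
Qed.

Lemma lk_nolg i A D : cplx D -> nolg i D -> nolg i (lk A D).
Proof.
move=> cD nD N NL Nm.
case: (boolP [disjoint N & A]) => dNA; last first.
  case: (leqP #|N| 1) => h; first by apply: leq_trans h _.
  move: dNA; rewrite -setI_eq0 => /set0Pn [a]; rewrite inE => /andP [aN aA].
  have : [set a] \proper N.
    by rewrite properEcard sub1set aN cards1.
  move/Nm; rewrite inE => /and3P [_ d _].
  by rewrite (disjointFr d (set11 a)) in aA.
have NAD : N :|: A \notin D.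
  apply: contra NL => h; rewrite inE dNA h !andbT /=; exact: cD _ _ h (subsetUl _ _).
have [N' [N'U N'D N'm]] := minnf NAD.
have hN' := nD _ N'D N'm.
suff sNN' : N \subset N' by apply: leq_trans (subset_leq_card sNN') hN'.
apply/subsetP => z zN; apply/negPn/negP => zN'.
have : N :\ z \proper N by rewrite properD1.
move/Nm; rewrite inE => /and3P [_ _ h].
suff : N' \in D by rewrite (negbTE N'D).
apply: (cD _ _ h).
apply/subsetP => v vN'; have := subsetP N'U v vN'; rewrite !inE.
case/orP => [vN|->]; last by rewrite orbT.
rewrite vN andbT; apply/orP; left; apply/eqP => vz; by rewrite -vz vN' in zN'.
Qed.

Definition lkK A K := [set F :\: A | F in [set F in K | A \subset F]].

Lemma lk_good e A D K : cplx D -> goodK e K D -> (exists F, F \in K /\ A \subset F) ->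
  goodK (e - #|A|) (lkK A K) (lk A D).
Proof.
move=> cD [KD Ke Kn Kr] [F0 [F0K AF0]].
have cardD F : F \in K -> A \subset F -> #|F :\: A| = e - #|A|.
  by move=> FK AF; rewrite cardsD (setIidPr AF) Ke.
split.
- move=> G /imsetP [F]; rewrite inE => /andP [FK AF] ->.
  rewrite inE disjD setDU // KD // !andbT; exact: cD _ _ (KD _ FK) (subsetDl _ _).
- move=> G /imsetP [F]; rewrite inE => /andP [FK AF] ->; exact: cardD.
- exists (F0 :\: A); apply/imsetP; exists F0 => //; by rewrite inE F0K.
- move=> G x /imsetP [F]; rewrite inE => /andP [FK AF] -> xG.
  have xF : x \in F by move: xG; rewrite inE => /andP [].
  have xA : x \notin A by move: xG; rewrite inE => /andP [].
  have [F' [F'K F'F sF']] := Kr F x FK xF.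
  have AF' : A \subset F'.
    apply: subset_trans sF'; apply/subsetP => v vA; rewrite !inE (subsetP AF _ vA) andbT.
    by apply: contraNneq xA => <-.
  exists (F' :\: A); split.
  + apply/imsetP; exists F' => //; by rewrite inE F'K.
  + apply: contra F'F => /eqP h; by rewrite -(setDU AF') h setDU.
  + apply/subsetP => v; rewrite !inE => /andP [vx /andP [vA vF]].
    rewrite vA /=; apply: (subsetP sF'); by rewrite !inE vx.
Qed.

End Main.

End MainM.
Import MainM.
Module Main2M.
Import GRing.Theory Num.Theory.
Set Implicit Arguments. Unset Strict Implicit.

Section Main2.
Variable T : finType.
Implicit Types (D K L : {set {set T}}) (A B F G N U : {set T}).

Definition Hyp i e D K := [/\ cplx D, dimle e D, nolg i D & goodK e K D].

Lemma body i : 0 < i -> forall e,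
  (forall e', e' < e -> forall D K, Hyp i e' D K -> pge (fp D) (Bp i e')) ->
  forall D K, Hyp i e D K -> pge (fp D) (Bp i e).
Proof.
move=> i0 e IHe D K.
move: {2}#|D| (leqnn #|D|) => n; elim: n D K => [|n IHn] D K hD [cD dD nD gK].
  case: gK => KD _ [F FK] _.
  by move: hD; rewrite leqn0 => /eqP/cards0_eq DE; move: (KD _ FK); rewrite DE inE.
case: (boolP [exists G : {set T}, [&& G \in D, #|G| <= i.+1 & [forall F in K, ~~ (G \subset F)]]]).
  move=> /existsP [G /and3P [GD Gs GK]].
  set D' := [set H in D | ~~ (G \subset H)].
  have sD : D' \subset D by apply/subsetP => H; rewrite inE => /andP [].
  have GD' : G \notin D' by rewrite inE subxx andbF.
  have D'n : #|D'| <= n.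
    rewrite -ltnS; apply: leq_trans hD; apply: proper_card; apply/properP; split => //.
    by exists G.
  apply: (pge_trans _ _ _ (fp_sub sD)).
  apply: (IHn D' K D'n); split.
  - move=> H H'; rewrite !inE => /andP [HD GH] H'H; rewrite (cD _ _ HD H'H) /=.
    by apply: contra GH => GH'; apply: subset_trans GH' H'H.
  - by move=> H /(subsetP sD); apply: dD.
  - move=> N' N'D' N'm.
    case: (boolP (N' \in D)) => N'D; last first.
      by apply: (nD _ N'D) => H /N'm /(subsetP sD).
    have GN' : G \subset N' by move: N'D'; rewrite inE N'D /= negbK.
    case: (boolP (G == N')) => [/eqP <- //| GnN'].
    have : G \proper N' by rewrite properEneq GnN' GN'.
    by move/N'm; rewrite (negbTE GD').
  - case: gK => KD Ke Kn Kr; split => // F FK; rewrite inE KD //=.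
    exact: (implyP (forallP GK F)).
move=> hnone.
have Gam : forall G, G \in D -> #|G| <= i.+1 -> exists F, F \in K /\ G \subset F.
  move=> G GD Gs; move/existsPn: hnone => /(_ G); rewrite GD Gs /=.
  by move=> /forallPn [F]; rewrite negb_imply negbK => /andP [FK GF]; exists F.
case: gK => KD Ke [F0 F0K] Kr.
have set0D : set0 \in D by apply: cD _ _ (KD _ F0K) (sub0set _).
have [e0|ep] := eqVneq e 0.
  rewrite e0 /Bp div0n mod0n expr0 mul1r Pp1.
  have E1 : fp [set (set0 : {set T})] = 1%R by rewrite /fp big_set1 cards0 expr0.
  rewrite -E1; apply: fp_sub; by rewrite sub1set.
have : 0 < #|F0| by rewrite (Ke _ F0K) lt0n.
rewrite card_gt0 => /set0Pn [x xF0].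
have [F1 [F1K F1F0 sF1]] := Kr F0 x F0K xF0.
set U := F0 :|: F1.
have UD : U \notin D.
  apply/negP => UD.
  have F0U : F0 == U by rewrite eqEcard subsetUl (Ke _ F0K) (dD _ UD).
  have F1U : F1 == U by rewrite eqEcard subsetUr (Ke _ F1K) (dD _ UD).
  by move: F1F0; rewrite (eqP F1U) -(eqP F0U) eqxx.
have [N [NU ND Nm]] := minnf UD.
have Ns := nD N ND Nm.
have N2 : 1 < #|N|.
  case: (ltnP 1 #|N|) => // h.
  move: h; rewrite leq_eqVlt ltnS leqn0 => /orP [/cards1P [v Nv] | /eqP/cards0_eq N0].
    have : v \in U by rewrite (subsetP NU) // Nv set11.
    rewrite inE => /orP [vF|vF].
      by move: ND; rewrite Nv (cD _ _ (KD _ F0K)) // sub1set.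
    by move: ND; rewrite Nv (cD _ _ (KD _ F1K)) // sub1set.
  by move: ND; rewrite N0 set0D.
set k := #|N|.-1.
have Nk : #|N| = k.+1 by rewrite /k prednK // ltnW.
have k0 : 0 < k by rewrite -ltnS -Nk.
have ki : k <= i by rewrite -ltnS -Nk.
have NyD : forall y, y \in N -> N :\ y \in D /\ #|N :\ y| = k.
  move=> y yN; split; first by apply: Nm; rewrite properD1.
  by move: (cardsD1 y N); rewrite yN Nk add1n => /eqP; rewrite eqSS => /eqP ->.
have [y0 y0N] : exists y0, y0 \in N by apply/set0Pn; rewrite -card_gt0 ltnW.
have ke : k <= e by have [h1 h2] := NyD y0 y0N; rewrite -h2; apply: dD.
apply: (pge_trans _ _ _ _ (step _ _ _ i0 k0 ki ke)).
rewrite -Nk; apply: decomp_lb => A hA.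
case/properP: (hA) => sAN [y yN yA].
have [A'D A'k] := NyD y yN.
have Ks : #|N :\ y| <= i.+1 by rewrite A'k (leq_trans ki).
have [F [FK A'F]] := Gam _ A'D Ks.
exists (lk (N :\ y) D); split.
  apply: IHe; first by rewrite ltn_subrL k0 lt0n ep.
  rewrite -A'k; split.
  - exact: lk_cplx cD.
  - exact: lk_dim dD.
  - exact: lk_nolg cD nD.
  - have gK : goodK e K D by split => //; exists F0.
    exact: lk_good cD gK (ex_intro _ F (conj FK A'F)).
move=> B; rewrite inE => /and3P [BD dB BA'].
have yB : y \notin B.
  apply/negP => yB; move: ND; rewrite (cD _ _ BA') //.
  apply/subsetP => v vN; rewrite !inE vN andbT.
  by case: (eqVneq v y) => [->|]; rewrite ?yB ?orbT.
split.
  rewrite disjoint_subset; apply/subsetP => v vB; rewrite !inE; apply/negP => vN.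
  case: (eqVneq v y) => [vy|vny]; first by rewrite -vy vB in yB.
  by move: (disjointFr dB vB); rewrite !inE vny vN.
apply: (cD _ _ BA'); apply/subsetP => v; rewrite !inE => /orP [vA|->]; last by [].
rewrite (subsetP sAN _ vA) andbT; apply/orP; right; apply/eqP => vy.
by rewrite -vy vA in yA.
Qed.
End Main2.

End Main2M.
Import Main2M.
Module ScountM.
Import GRing.Theory Num.Theory.
Set Implicit Arguments. Unset Strict Implicit.

Section S.
Variables (i d : nat).
Hypothesis i0 : 0 < i.
Hypothesis idv : i %| d.+1.
Let N := S_nv i d.
Let q := S_q i d.

Lemma Sr : S_r i d = i.
Proof.
rewrite /S_r; move: idv => /dvdnP [m hm].
have m0 : 0 < m by case: m hm.
have -> : d = (m.-1 * i + i.-1)%N.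
    by apply/eqP; rewrite -eqSS hm -addnS (prednK i0) -mulSnr (prednK m0).
by rewrite modnMDl modn_small ?prednK // ltn_predL.
Qed.

Lemma NE : N = (q.+1 * i.+1)%N.
Proof. by rewrite /N /S_nv Sr mulSnr. Qed.

Definition W p : {set 'I_N} := [set v : 'I_N | v %/ i.+1 < p].
Definition Tp p : {set {set 'I_N}} :=
  [set F : {set 'I_N} | (F \subset W p) && all (fun k => ~~ (S_block i d k \subset F)) (iota 0 p)].

Lemma card_blk p : p < q.+1 -> #|S_block i d p| = i.+1.
Proof.
move=> pq.
have hb : forall r : 'I_i.+1, (p * i.+1 + r < N)%N.
  move=> r; rewrite NE; apply: (@leq_trans ((p.+1) * i.+1)); last by rewrite leq_mul2r pq orbT.
  by rewrite mulSnr ltn_add2l ltn_ord.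
pose g (r : 'I_i.+1) : 'I_N := Ordinal (hb r).
have ginj : injective g by move=> r r' /(congr1 val) /= /addnI /val_inj.
have -> : S_block i d p = g @: setT.
  apply/setP => v; rewrite !inE; apply/eqP/imsetP => [vp | [r _ ->]].
    have vlt : v %% i.+1 < i.+1 by rewrite ltn_mod.
    exists (Ordinal vlt) => //; apply: val_inj => /=; by rewrite {1}(divn_eq v i.+1) vp.
  by rewrite /= divnMDl // divn_small ?addn0.
by rewrite card_imset // cardsT card_ord.
Qed.

Lemma Tp0 : Tp 0 = [set set0].
Proof.
apply/setP => F; rewrite !inE /= andbT; apply/idP/idP => [FW|/eqP ->]; last by rewrite sub0set.
apply/eqP/setP => v; rewrite inE; apply/negP => vF.
by move: (subsetP FW v vF); rewrite inE.
Qed.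

Lemma fpTp p : p <= q.+1 -> fp (Tp p) = (Pp i.+1 ^+ p)%R.
Proof.
elim: p => [_|p IH hp]; first by rewrite Tp0 /fp big_set1 cards0 expr0 expr0.
have pq : p < q.+1 by [].
rewrite exprS -(IH (ltnW hp)) -{1}(card_blk pq).
apply: decomp_eq.
- move=> G; rewrite inE => /andP [_ /allP h]; apply: h; by rewrite mem_iota add0n leq0n ltnSn.
- move=> B; rewrite inE => /andP [BW _]; rewrite disjoint_subset; apply/subsetP => v vB.
  move: (subsetP BW v vB); rewrite !inE => vp; by rewrite neq_ltn vp.
- move=> A pA; apply/setP => G; rewrite inE; apply/andP/imsetP.
  + move=> [GT /eqP GA]; exists (G :\: S_block i d p).
      move: GT; rewrite !inE => /andP [GW /allP Gall]; apply/andP; split.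
        apply/subsetP => v; rewrite !inE => /andP [vb vG].
        move: (subsetP GW v vG); rewrite inE ltnS leq_eqVlt => /orP [/eqP vp|//].
        by rewrite vp eqxx in vb.
      apply/allP => k; rewrite mem_iota add0n => kp; apply/negP => sk.
      have := Gall k; rewrite mem_iota add0n ltnS (ltnW kp) => /(_ isT) /negP; apply.
      apply: subset_trans sk _; exact: subsetDl.
    apply/setP => v; rewrite in_setU in_setD; case vb: (v \in S_block i d p) => /=.
      by rewrite orbF -GA in_setI vb andbT.
    have -> : (v \in A) = false by apply/negP => vA; rewrite (subsetP (proper_sub pA) _ vA) in vb.
    by [].
  + move=> [B]; rewrite inE => /andP [BW /allP Ball] ->.
    have dB : forall v, v \in B -> v \notin S_block i d p.
      move=> v vB; move: (subsetP BW _ vB); rewrite !inE => h; by rewrite neq_ltn h.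
    have AS : A \subset S_block i d p := proper_sub pA.
    split.
      rewrite inE; apply/andP; split.
        apply/subsetP => v; rewrite !inE => /orP [vA|vB].
          move: (subsetP (proper_sub pA) _ vA); rewrite inE => /eqP ->; exact: ltnSn.
        move: (subsetP BW _ vB); rewrite inE => h; exact: ltnW.
      apply/allP => k; rewrite mem_iota add0n leq0n ltnS /= leq_eqVlt => /orP [/eqP ->|kp].
        apply/negP => sb; move: pA; rewrite properE AS /=; apply/negP; rewrite negbK.
        apply/subsetP => v vb; move: (subsetP sb v vb); rewrite in_setU => /orP [//|vB].
        by move: (dB v vB); rewrite vb.
      apply/negP => sb.
      have : S_block i d k \subset B.
        apply/subsetP => v vk; move: (subsetP sb v vk); rewrite in_setU => /orP [vA|//].
        move: (subsetP AS v vA) vk; rewrite !inE => /eqP -> /eqP kp'.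
        by rewrite kp' ltnn in kp.
      by apply/negP; apply: Ball; rewrite mem_iota add0n leq0n.
    apply/eqP/setP => v; rewrite in_setI in_setU.
    case vA: (v \in A) => /=; first by rewrite (subsetP AS v vA).
    by case vB: (v \in B) => //=; rewrite (negbTE (dB v vB)).
Qed.

Lemma S_fp : fp (S_cplx i d) = (Pp i.+1 ^+ q.+1)%R.
Proof.
rewrite -fpTp //; congr fp; apply/setP => F; rewrite !inE.
have -> : F \subset W q.+1.
  apply/subsetP => v _; rewrite inE ltn_divLR // -NE; exact: ltn_ord.

rewrite andTb; apply/idP/idP => [/forallP h|/allP h].
  apply/allP => k; rewrite mem_iota add0n leq0n /= => kq; exact: (h (Ordinal kq)).
apply/forallP => k; by apply: h; rewrite mem_iota add0n leq0n /=.
Qed.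
End S.

End ScountM.
Import ScountM.
Import GRing.Theory Num.Theory.

Lemma mainthm (T : finType) i : 0 < i -> forall e (D K : {set {set T}}), Hyp i e D K -> pge (fp D) (Bp i e).
Proof.
move=> i0 e; move: {2}e (leqnn e) => E; elim: E e => [|E IH] e eE D K H;
  apply: (body i0 _ H) => e' e'e D' K' H'.
  by move: eE; rewrite leqn0 => /eqP ee; rewrite ee in e'e.
exact: (IH e' (leq_trans e'e eE) D' K' H').
Qed.

Theorem theorem1p1 (d i n : nat) (D : {set {set 'I_n}}) :
  0 < i -> i <= d.+1 -> i %| d.+1 ->
  in_C i d D ->
  forall j : nat, fnum j (S_cplx i d) <= fnum j D.
Proof.
move=> i0 ile idv [cD [[F0 F0D F0s] dD] [c [[F1 /andP [F1D F1s] cF1] hc]] nma] j.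
set K := [set F in D | (#|F| == d.+1) && (c F != 0)].
have H : Hyp i d.+1 D K.
  split.
  - exact: cD.
  - exact: dD.
  - by move=> F FD Fm; apply: nma; split.
  split.
  - by move=> F; rewrite inE => /andP [].
  - by move=> F; rewrite inE => /and3P [_ /eqP].
  - by exists F1; rewrite inE F1D F1s cF1.
  move=> F x; rewrite inE => /and3P [FD Fs cF] xF.
  set G := F :\ x.
  have Gs : #|G| = d by move: (cardsD1 x F); rewrite xF (eqP Fs) add1n => -[<-].
  have := hc G Gs; rewrite /boundary_at (bigD1 F) /=; last by rewrite FD Fs subD1set.
  case: (boolP [exists F' in D, [&& F' != F, (#|F'| == d.+1) && (G \subset F') & c F' != 0]]).
    move=> /existsP [F' /andP [F'D /and3P [F'F /andP [F's GF'] cF']]] _.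
    by exists F'; split => //; rewrite inE F'D F's.
  move=> /existsPn hn.
  rewrite big1; last first.
    move=> F' /andP [/andP [F'D hF'] F'F]; have := hn F'; rewrite F'D /= F'F hF' /= negbK => /eqP ->.
    by rewrite mulr0.
  rewrite addr0 => /eqP; rewrite mulf_eq0 (negbTE cF) orbF /incid expf_eq0 oppr_eq0 oner_eq0 andbF.
  by [].
have := @mainthm _ _ i0 _ _ _ H.
have [m hm] := dvdnP idv.
have m0 : 0 < m by case: m hm.
have dE : d = (m.-1 * i + i.-1)%N.
  by apply/eqP; rewrite -eqSS hm -addnS (prednK i0) -mulSnr (prednK m0).
have -> : Bp i d.+1 = (Pp i.+1 ^+ (S_q i d).+1)%R.
  rewrite /Bp hm mulnK // modnMl Pp1 GRing.mulr1 /S_q dE divnMDl // divn_small ?addn0 ?prednK //.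
rewrite -S_fp // => hge.
have := hge j.+1; rewrite coefB !coef_fp subr_ge0 ler_nat.
by [].
Qed.
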